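(* There is no universal distributed algorithm that elects a leader for all feasible configurations of size $4$; that is, there is no pair $(D,f)$ of a DRIP $D$ and a decision function $f$ such that $(D,f)$ is a dedicated leader election algorithm for every feasible configuration with $4$ nodes.
   Context: Model. A configuration is a finite simple undirected connected graph $G$ in which each node $v$ is tagged with a non-negative integer $t_v$ (wakeup tag); size = number of nodes. Nodes are anonymous and communicate in synchronous global rounds. A node $v$ wakes up in the first global round $r\le t_v$ in which it receives a message, if any, and otherwise in global round $t_v$; its local clock is $0$ in its wakeup round, it acts from local round $1$, and nodes do not know the global clock. In each round a node transmits a message to all neighbours, listens, or terminates. A listening node receives $M$ if exactly one neighbour transmits ($M$), hears collision noise (distinct from silence and messages) if at least two neighbours transmit, and silence otherwise; a transmitting node hears nothing. The history $\mathcal H_v[i]$ of $v$ in local round $i$ is $(\emptyset)$ (transmitted, silence, or spontaneous wakeup at $i=0$), $(M)$ (received $M$, or woken by $M$ at $i=0$), or $( * )$ (collision). A DRIP is a function $D$ from finite history vectors to $\{\mathit{listen},\mathit{transmit}(M),\mathit{terminate}\}$; each node $v$ in local round $i\ge1$ performs $D(\mathcal H_v[0\ldots i-1])$, and every node eventually terminates permanently (first at local round $done_v$). A decision function $f$ maps $\mathcal H_v[0\ldots done_v]$ to $\{0,1\}$; $(D,f)$ is a dedicated leader election algorithm for $G$ if, when all nodes of $G$ execute $D$, exactly one node gets output $1$; $G$ is feasible if such a pair exists. *)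

(* Defs.v *)
From mathcomp Require Import all_boot.
Set Implicit Arguments. Unset Strict Implicit. Unset Printing Implicit Defensive.

(* Messages are natural numbers (any countable message set can be encoded). *)
Definition msg := nat.

Inductive hentry := HNone | HMsg of msg | HColl.

Inductive action := Listen | Transmit of msg | Terminate.

Definition is_term (a : action) : bool :=
  if a is Terminate then true else false.

(* A DRIP maps finite history vectors H[0..i-1] to an action;
   a decision function maps H[0..done] to {0,1} (here bool). *)
Definition drip := seq hentry -> action.
Definition decision := seq hentry -> bool.

(* A configuration of size n: a finite simple undirected connected graph on
   the nodes 'I_n (the labels are invisible to the algorithm) *)
Definition simple_connected_graph (n : nat) (adj : rel 'I_n) : Prop :=
  symmetric adj /\ irreflexive adj /\ (forall u v, connect adj u v).

Section Exec.
Variables (n : nat) (adj : rel 'I_n) (tag : 'I_n -> nat) (D : drip).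

(* Effective action of an awake node whose history so far is h = H[0..i-1]
   (so it acts in local round i = size h): once a node has terminated it
   stays terminated permanently. *)
Definition eff_action (h : seq hentry) : action :=
  if has (fun k => is_term (D (take k h))) (iota 1 (size h).-1)
  then Terminate else D h.

(* state: for each node, None = still asleep, Some h = awake with history
   h = H[0..i] after the current global round *)
Definition state_t := 'I_n -> option (seq hentry).

Definition transmits (st : state_t) (u : 'I_n) : option msg :=
  match st u with
  | Some h => if eff_action h is Transmit m then Some m else None
  | None => None
  end.

Definition reception (st : state_t) (v : 'I_n) : hentry :=
  match pmap id [seq transmits st u | u <- enum 'I_n & adj v u] with
  | [::] => HNone
  | [:: m] => HMsg m
  | _ => HColl
  end.

(* global round r, given the state st at the end of round r-1 *)
Definition step (st : state_t) (r : nat) : state_t := fun v =>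
  match st v with
  | Some h =>
      Some (rcons h (if eff_action h is Listen then reception st v else HNone))
  | None =>
      match reception st v with
      | HMsg m => if r <= tag v then Some [:: HMsg m] else None
      | _ => if r == tag v then Some [:: HNone] else None
      end
  end.

Fixpoint state (r : nat) : state_t :=
  match r with
  | 0 => step (fun _ => None) 0
  | r'.+1 => step (state r') r
  end.

(* node v terminates (first) in local round d and outputs b = f H[0..d] *)
Definition outputs (f : decision) (v : 'I_n) (b : bool) : Prop :=
  exists r h d, state r v = Some h /\ 0 < d /\ d < size h /\
    D (take d h) = Terminate /\
    (forall k, 0 < k < d -> D (take k h) <> Terminate) /\
    f (take d.+1 h) = b.

End Exec.

Definition dedicated_LE (n : nat) (adj : rel 'I_n) (tag : 'I_n -> nat)
  (D : drip) (f : decision) : Prop :=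
  (forall v, exists b, outputs adj tag D f v b) /\
  (exists v, outputs adj tag D f v true /\
     forall u, outputs adj tag D f u true -> u = v).

Definition feasible (n : nat) (adj : rel 'I_n) (tag : 'I_n -> nat) : Prop :=
  exists D f, dedicated_LE adj tag D f.

(* Main.v *)
Require Import Defs.
From mathcomp Require Import all_boot zify.
From Stdlib Require Import Classical.
Set Implicit Arguments. Unset Strict Implicit. Unset Printing Implicit Defensive.


Section Generic.
Variables (n : nat) (adj : rel 'I_n) (tag : 'I_n -> nat) (D : drip).

Lemma stateS r : state adj tag D r.+1 = step adj tag D (state adj tag D r) r.+1.
Proof. by []. Qed.

Lemma growth r v h : state adj tag D r v = Some h ->
  forall k, exists e, state adj tag D (r + k) v = Some (h ++ e).
Proof.
move=> Hs; elim=> [|k [e IH]]; first by exists [::]; rewrite addn0 cats0.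
rewrite addnS stateS /step IH.
by eexists; rewrite rcons_cat.
Qed.

Lemma term_ext h e d : 0 < d < size h -> D (take d h) = Terminate ->
  eff_action D (h ++ e) = Terminate.
Proof.
move=> /andP[d0 dh] Hd; rewrite /eff_action.
have -> : has (fun k => is_term (D (take k (h ++ e)))) (iota 1 (size (h ++ e)).-1).
  apply/hasP; exists d.
    rewrite mem_iota d0 /= size_cat add1n prednK; last by rewrite addn_gt0 (leq_ltn_trans _ dh).
    by apply: (leq_trans dh); rewrite leq_addr.
  by rewrite takel_cat ?Hd // ltnW.
by [].
Qed.

Lemma terminated_after r v h d : state adj tag D r v = Some h ->
  0 < d < size h -> D (take d h) = Terminate ->
  forall r', r <= r' -> exists h', state adj tag D r' v = Some h' /\
     eff_action D h' = Terminate.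
Proof.
move=> Hs Hd HT r' le; have [e He] := growth Hs (r' - r).
rewrite subnKC // in He; exists (h ++ e); split=> //; exact: (term_ext e Hd HT).
Qed.

Lemma transmits_term (st : state_t n) v h : st v = Some h -> eff_action D h = Terminate ->
  transmits D st v = None.
Proof. by rewrite /transmits => -> ->. Qed.

Lemma outputs_fun f v b b' : outputs adj tag D f v b -> outputs adj tag D f v b' -> b = b'.
Proof.
wlog: b b' / forall r h d r' h' d', state adj tag D r v = Some h ->
   state adj tag D r' v = Some h' -> r <= r' -> True.
  by move=> W; apply: W.
move=> _ [r [h [d [Hs [d0 [dh [Ht [Hm Hf]]]]]]]] [r' [h' [d' [Hs' [d0' [dh' [Ht' [Hm' Hf']]]]]]]].
have key : forall r h d r' h' d', state adj tag D r v = Some h ->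
   state adj tag D r' v = Some h' -> r <= r' ->
   0 < d -> d < size h -> D (take d h) = Terminate ->
   (forall k, 0 < k < d -> D (take k h) <> Terminate) ->
   0 < d' -> d' < size h' -> D (take d' h') = Terminate ->
   (forall k, 0 < k < d' -> D (take k h') <> Terminate) ->
   f (take d.+1 h) = f (take d'.+1 h').
  move=> {r h d r' h' d' Hs d0 dh Ht Hm Hf Hs' d0' dh' Ht' Hm' Hf'}.
  move=> r h d r' h' d' Hs Hs' le d0 dh Ht Hm d0' dh' Ht' Hm'.
  have [e He] := growth Hs (r' - r); rewrite subnKC // Hs' in He; case: He => Eh; subst h'.
  have dd : d = d'.
    case: (ltngtP d d') => // lt.
    - by exfalso; apply: (Hm' d); [rewrite d0 lt | rewrite takel_cat // ltnW].
    - exfalso; apply: (Hm d'); first by rewrite d0' lt.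
      by rewrite -(takel_cat e) // ltnW // (ltn_trans lt).
  by subst d'; rewrite takel_cat.
case: (leqP r r') => le.
  by rewrite -Hf -Hf'; apply: (key r h d r' h' d').
rewrite -Hf -Hf'; symmetry; apply: (key r' h' d' r h d) => //; exact: ltnW.
Qed.

Lemma reception_ext st1 st2 v : (forall w, st1 w = st2 w) ->
  reception adj D st1 v = reception adj D st2 v.
Proof.
move=> E; rewrite /reception.
by have -> : [seq transmits D st1 u | u <- enum 'I_n & adj v u] =
            [seq transmits D st2 u | u <- enum 'I_n & adj v u]
  by apply: eq_map => u; rewrite /transmits E.
Qed.

Lemma twins u v : tag u = tag v -> adj u =1 adj v ->
  forall r, state adj tag D r u = state adj tag D r v.
Proof.
move=> Tuv Auv.
have Rec : forall st, reception adj D st u = reception adj D st v.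
  by move=> st; rewrite /reception (eq_filter Auv).
elim=> [|r IH]; first by rewrite /= /step Rec Tuv.
by rewrite !stateS /step IH Rec Tuv.
Qed.

End Generic.

Lemma step_congr n1 n2 (adj1 : rel 'I_n1) (adj2 : rel 'I_n2) tag1 tag2 D st1 st2 r v1 v2 :
  st1 v1 = st2 v2 -> reception adj1 D st1 v1 = reception adj2 D st2 v2 ->
  tag1 v1 = tag2 v2 -> step adj1 tag1 D st1 r v1 = step adj2 tag2 D st2 r v2.
Proof. by move=> E1 E2 E3; rewrite /step E1 E2 E3. Qed.


Definition i0 : 'I_4 := @Ordinal 4 0 isT.
Definition i1 : 'I_4 := @Ordinal 4 1 isT.
Definition i2 : 'I_4 := @Ordinal 4 2 isT.
Definition i3 : 'I_4 := @Ordinal 4 3 isT.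

Lemma enum4 : enum 'I_4 = [:: i0; i1; i2; i3].
Proof. by apply: (inj_map val_inj); rewrite val_enum_ord. Qed.

Lemma I4_cases (v : 'I_4) : [\/ v = i0, v = i1, v = i2 | v = i3].
Proof.
case: v => [[|[|[|[|m]]]] Hm].
- by constructor 1; apply: val_inj.
- by constructor 2; apply: val_inj.
- by constructor 3; apply: val_inj.
- by constructor 4; apply: val_inj.
- by [].
Qed.

Definition hear (l : seq (option msg)) : hentry :=
  match pmap id l with [::] => HNone | [:: m] => HMsg m | _ => HColl end.

Definition adjS : rel 'I_4 := fun u v => (val u == 0) (+) (val v == 0).
Definition tagS (T : nat) : 'I_4 -> nat := fun u => if val u == 0 then T else 0.
Definition adjK : rel 'I_4 := fun u v =>
  ((val u == 1) || (val u == 2)) (+) ((val v == 1) || (val v == 2)).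
Definition tagK (T : nat) : 'I_4 -> nat :=
  fun u => if val u == 0 then 1 else if val u == 3 then T else 0.

Section Rec.
Variables (D : drip) (st : state_t 4).
Local Notation t u := (transmits D st u).
Lemma recS0 : reception adjS D st i0 = hear [:: t i1; t i2; t i3].
Proof. by rewrite /reception enum4. Qed.
Lemma recS1 : reception adjS D st i1 = hear [:: t i0].
Proof. by rewrite /reception enum4. Qed.
Lemma recS2 : reception adjS D st i2 = hear [:: t i0].
Proof. by rewrite /reception enum4. Qed.
Lemma recS3 : reception adjS D st i3 = hear [:: t i0].
Proof. by rewrite /reception enum4. Qed.
Lemma recK0 : reception adjK D st i0 = hear [:: t i1; t i2].
Proof. by rewrite /reception enum4. Qed.
Lemma recK1 : reception adjK D st i1 = hear [:: t i0; t i3].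
Proof. by rewrite /reception enum4. Qed.
Lemma recK2 : reception adjK D st i2 = hear [:: t i0; t i3].
Proof. by rewrite /reception enum4. Qed.
Lemma recK3 : reception adjK D st i3 = hear [:: t i1; t i2].
Proof. by rewrite /reception enum4. Qed.
End Rec.

Lemma scg_hub (adj : rel 'I_4) : symmetric adj -> irreflexive adj ->
  (forall u, connect adj u i0) -> simple_connected_graph adj.
Proof.
move=> Sy Ir H; split=> //; split=> // u v.
apply: (connect_trans (H u)); rewrite (sym_connect_sym Sy); exact: H.
Qed.

Lemma scgS : simple_connected_graph adjS.
Proof.
apply: scg_hub; first by move=> u v; rewrite /adjS addbC.
  by move=> u; rewrite /adjS addbb.
by move=> u; case: (I4_cases u) => ->; [exact: connect0 | exact: connect1 ..].
Qed.
Lemma scgK : simple_connected_graph adjK.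
Proof.
apply: scg_hub; first by move=> u v; rewrite /adjK addbC.
  by move=> u; rewrite /adjK addbb.
move=> u; case: (I4_cases u) => ->; [exact: connect0 | exact: connect1 | exact: connect1 |].
by apply: (connect_trans (y := i1)); exact: connect1.
Qed.


Lemma rcons_nseq T n (x : T) : rcons (nseq n x) x = nseq n.+1 x.
Proof. by elim: n => //= n ->. Qed.

Lemma nseq_term D s r : 0 < s -> s <= r -> D (nseq s HNone) = Terminate ->
  eff_action D (nseq r.+1 HNone) = Terminate.
Proof.
move=> s0 sr Hs.
have := @term_ext D (nseq r.+1 HNone) [::] s; rewrite cats0; apply.
  by rewrite size_nseq s0 ltnS.
by rewrite take_nseq // (leq_trans sr).
Qed.

Lemma hear3 x : hear [:: x; x; x] = HNone \/ hear [:: x; x; x] = HColl.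
Proof. by case: x => [m|]; [right|left]. Qed.

Lemma star_solo D T s : 0 < s -> s < T -> D (nseq s HNone) = Terminate -> forall r,
 [/\ state adjS (tagS T) D r i1 = Some (nseq r.+1 HNone),
     state adjS (tagS T) D r i2 = Some (nseq r.+1 HNone),
     state adjS (tagS T) D r i3 = Some (nseq r.+1 HNone) &
     state adjS (tagS T) D r i0 = if r < T then None else Some (nseq (r - T).+1 HNone)].
Proof.
move=> s0 sT Hs; have T0 : 0 < T by apply: leq_ltn_trans sT.
elim=> [|r [H1 H2 H3 H0]].
  rewrite /= /step /= !recS1 !recS2 !recS3 !recS0 /= T0.
  by rewrite /tagS /=; case: T T0 sT.
set st := state adjS (tagS T) D r in H0 H1 H2 H3 *.
have Tl : forall v, st v = Some (nseq r.+1 HNone) -> transmits D st v = if r < T then transmits D st v else None.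
  move=> v Hv; case: ltnP => // rT.
  by apply: (transmits_term Hv); apply: (nseq_term s0 _ Hs); apply: ltnW; exact: leq_trans sT rT.
have Leaf : forall v, v <> i0 -> st v = Some (nseq r.+1 HNone) -> reception adjS D st v = hear [:: transmits D st i0] ->
    step adjS (tagS T) D st r.+1 v = Some (nseq r.+2 HNone).
  move=> v nv Hv Rv; rewrite /step Hv Rv.
  suff -> : (if eff_action D (nseq r.+1 HNone) is Listen then hear [:: transmits D st i0] else HNone) = HNone
    by rewrite rcons_nseq.
  case: (ltnP r T) H0 => rT H0.
    by rewrite /transmits H0; case: (eff_action _ _).
  rewrite (nseq_term s0 _ Hs) //; apply: ltnW; exact: leq_trans sT rT.
rewrite !stateS -/st; split.
- apply: Leaf; [by move/(congr1 val) | exact: H1 | exact: recS1].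
- apply: Leaf; [by move/(congr1 val) | exact: H2 | exact: recS2].
- apply: Leaf; [by move/(congr1 val) | exact: H3 | exact: recS3].
rewrite /step recS0 H0.
have E12 : transmits D st i2 = transmits D st i1 by rewrite /transmits H1 H2.
have E13 : transmits D st i3 = transmits D st i1 by rewrite /transmits H1 H3.
rewrite E12 E13.
case: (ltngtP r.+1 T) => rT.
- by case: (hear3 (transmits D st i1)) => ->.
- rewrite subSn // (Tl i1 H1) ltnNge -ltnS rT /=.
  by case: (eff_action _ _); rewrite rcons_nseq.
- by rewrite rT subnn; case: (hear3 (transmits D st i1)) => ->.
Qed.

Definition allnone n (adj : rel 'I_n) tag D v :=
  forall r h, state adj tag D r v = Some h -> h = nseq (size h) HNone.

Lemma outputs_nseq n (adj : rel 'I_n) tag D f v b :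
  outputs adj tag D f v b -> allnone adj tag D v ->
  exists d, [/\ 0 < d, D (nseq d HNone) = Terminate,
    (forall k, 0 < k < d -> D (nseq k HNone) <> Terminate) & b = f (nseq d.+1 HNone)].
Proof.
move=> [r [h [d [Hs [d0 [dh [Ht [Hm Hf]]]]]]]] An.
have Eh := An _ _ Hs; rewrite Eh in dh Ht Hm Hf.
rewrite size_nseq in dh.
exists d; split=> //.
- by rewrite -(take_nseq _ (ltnW dh)).
- move=> k /andP[k0 kd]; rewrite -(take_nseq _ (ltnW (ltn_trans kd dh))).
  by apply: Hm; rewrite k0.
- by rewrite -Hf take_nseq.
Qed.

Lemma outputs_agree n (adj : rel 'I_n) tag D f v w b b' :
  outputs adj tag D f v b -> outputs adj tag D f w b' ->
  allnone adj tag D v -> allnone adj tag D w -> b = b'.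
Proof.
move=> Ov Ow Av Aw.
have [d [d0 Hd Md ->]] := outputs_nseq Ov Av.
have [d' [d0' Hd' Md' ->]] := outputs_nseq Ow Aw.
case: (ltngtP d d') => // lt.
- by exfalso; apply: (Md' d) => //; rewrite d0.
- by exfalso; apply: (Md d') => //; rewrite d0'.
- by rewrite lt.
Qed.

Lemma allnone_nseq n (adj : rel 'I_n) tag D v :
  (forall r, state adj tag D r v = None \/ exists k, state adj tag D r v = Some (nseq k HNone)) ->
  allnone adj tag D v.
Proof.
move=> H r h Hs; case: (H r); rewrite Hs // => -[k [->]].
by rewrite size_nseq.
Qed.

Lemma case1 D f s : 0 < s -> D (nseq s HNone) = Terminate ->
  ~ dedicated_LE adjS (tagS s.+1) D f.
Proof.
move=> s0 Hs [All [v [Ov Uv]]].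
have St := star_solo s0 (ltnSn s) Hs.
have An : forall w, allnone adjS (tagS s.+1) D w.
  move=> w; apply: allnone_nseq => r; have [H1 H2 H3 H0] := St r.
  case: (I4_cases w) => ->; [rewrite H0; case: ifP => _; [left|right; eexists] | right; eexists ..]; eauto.
pose u := if v == i0 then i1 else i0.
have [b Ob] := All u.
have Eb : b = true by apply: (outputs_agree Ob Ov).
subst b; have := Uv u Ob; rewrite /u; case: eqP => [->|nv].
  by move/(congr1 val).
by move=> E; apply: nv.
Qed.

Lemma tr_eq D (st1 st2 : state_t 4) u v : st1 u = st2 v -> transmits D st1 u = transmits D st2 v.
Proof. by rewrite /transmits => ->. Qed.

Lemma hear2 x : hear [:: x; x] = hear [:: x; x; x].
Proof. by case: x. Qed.
Lemma hear2' x : hear [:: x; x] = HNone \/ hear [:: x; x] = HColl.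
Proof. by case: x => [m|]; [right|left]. Qed.
Lemma hearN x : hear [:: x; None] = hear [:: x].
Proof. by case: x. Qed.

Lemma twinsS D r : state adjS (tagS 1) D r i2 = state adjS (tagS 1) D r i1 /\
                   state adjS (tagS 1) D r i3 = state adjS (tagS 1) D r i1.
Proof. by split; apply: twins => // w. Qed.

Lemma sim D T2 : forall r, r < T2 ->
 [/\ state adjK (tagK T2) D r i0 = state adjS (tagS 1) D r i0,
     state adjK (tagK T2) D r i1 = state adjS (tagS 1) D r i1,
     state adjK (tagK T2) D r i2 = state adjS (tagS 1) D r i1 &
     state adjK (tagK T2) D r i3 = None].
Proof.
elim=> [|r IH] lt.
  rewrite /= /step /= recK0 recK1 recK2 recK3 recS0 recS1 /=.
  by rewrite /tagK /= eq_sym (gtn_eqF lt).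
have [E0 E1 E2 E3] := IH (ltnW lt).
have [F2 F3] := twinsS D r.
rewrite !stateS.
set sK := state adjK (tagK T2) D r in E0 E1 E2 E3 *.
set sS := state adjS (tagS 1) D r in E0 E1 E2 E3 F2 F3 *.
have tK3 : transmits D sK i3 = None by rewrite /transmits E3.
split.
- apply: step_congr => //.
  rewrite recK0 recS0 (tr_eq D E1) (tr_eq D E2) (tr_eq D F2) (tr_eq D F3).
  exact: hear2.
- apply: step_congr => //.
  by rewrite recK1 recS1 tK3 hearN (tr_eq D E0).
- apply: step_congr => //.
  by rewrite recK2 recS1 tK3 hearN (tr_eq D E0).
- rewrite /step E3 recK3 (tr_eq D E1) (tr_eq D E2) /tagK /= (ltn_eqF lt).
  by case: (hear2' (transmits D sS i1)) => ->.
Qed.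

Lemma case2 D f : (forall k, 0 < k -> D (nseq k HNone) <> Terminate) ->
  dedicated_LE adjS (tagS 1) D f -> exists T2, 5 <= T2 /\ ~ dedicated_LE adjK (tagK T2) D f.
Proof.
move=> NT [AllS _].
have [b1 [r1 [h1 [d1 [Hs [d0 [dh [Ht _]]]]]]]] := AllS i1.
exists (r1 + 5); split; first by rewrite leq_addl.
set T2 := r1 + 5.
move=> [AllK _].
have lt1 : r1 < T2 by rewrite /T2 addnS ltnS leq_addr.
have [_ K1 K2 _] := sim D lt1.
have Dd : 0 < d1 < size h1 by rewrite d0 dh.
have TA : forall r, r1 <= r -> transmits D (state adjK (tagK T2) D r) i1 = None /\
                              transmits D (state adjK (tagK T2) D r) i2 = None.
  move=> r le; rewrite Hs in K1 K2.
  have [h' [E1 T1]] := terminated_after K1 Dd Ht le.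
  have [h'' [E2 T2']] := terminated_after K2 Dd Ht le.
  by split; [exact: transmits_term E1 T1 | exact: transmits_term E2 T2'].
have Dn : forall k, state adjK (tagK T2) D (T2 + k) i3 = Some (nseq k.+1 HNone).
  elim=> [|k IH].
    move: (stateS adjK (tagK T2) D (r1 + 4)); rewrite -addnS -/T2 addn0 => ->.
    have lt4 : r1 + 4 < T2.
      by rewrite /T2 ltn_add2l.
    rewrite /step; have [_ _ _ ->] := sim D lt4.
    rewrite recK3; have [-> ->] := TA (r1 + 4) (leq_addr _ _).
    by rewrite /= /tagK /= eqxx.
  rewrite addnS stateS /step IH recK3.
  have [-> ->] := TA (T2 + k) (leq_trans (leq_addr 5 r1) (leq_addr _ _)).
  by rewrite /=; case: (eff_action _ _); rewrite rcons_nseq.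
have An : allnone adjK (tagK T2) D i3.
  apply: allnone_nseq => r; case: (ltnP r T2) => le.
    by left; have [_ _ _ ->] := sim D le.
  by right; exists (r - T2).+1; rewrite -(subnKC le) Dn subnKC.
have [b Ob] := AllK i3.
have [d [d0' Hd _ _]] := outputs_nseq Ob An.
exact: NT Hd.
Qed.


Lemma eff_notterm D h : (forall k, 0 < k < size h -> D (take k h) <> Terminate) ->
  eff_action D h = D h.
Proof.
move=> H; rewrite /eff_action; case: hasP => // -[k].
rewrite mem_iota add1n => /andP[k0 kh].
have kh' : k < size h by move: k0 kh; case: (size h) => [|m] /=; lia.
by case E: (D _) => //= _; exfalso; apply: (H k) => //; rewrite k0.
Qed.

Lemma star_quiet D T : 0 < T -> forall r, r <= T ->
 [/\ state adjS (tagS T) D r i1 = Some (nseq r.+1 HNone),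
     state adjS (tagS T) D r i2 = Some (nseq r.+1 HNone),
     state adjS (tagS T) D r i3 = Some (nseq r.+1 HNone) &
     state adjS (tagS T) D r i0 = if r < T then None else Some [:: HNone]].
Proof.
move=> T0; elim=> [|r IH] rT.
  rewrite /= /step /= !recS1 !recS2 !recS3 !recS0 /= T0.
  by rewrite /tagS /=; case: T T0 rT.
have [H1 H2 H3 H0] := IH (ltnW rT).
rewrite rT in H0.
rewrite !stateS.
set st := state adjS (tagS T) D r in H0 H1 H2 H3 *.
have t0 : transmits D st i0 = None by rewrite /transmits H0.
have Leaf : forall v, st v = Some (nseq r.+1 HNone) -> reception adjS D st v = hear [:: transmits D st i0] ->
    step adjS (tagS T) D st r.+1 v = Some (nseq r.+2 HNone).
  move=> v Hv Rv; rewrite /step Hv Rv t0 /=.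
  by case: (eff_action _ _); rewrite rcons_nseq.
split; first exact: Leaf H1 (recS1 _ _).
- exact: Leaf H2 (recS2 _ _).
- exact: Leaf H3 (recS3 _ _).
rewrite /step recS0 H0.
have E12 : transmits D st i2 = transmits D st i1 by rewrite /transmits H1 H2.
have E13 : transmits D st i3 = transmits D st i1 by rewrite /transmits H1 H3.
rewrite E12 E13 /tagS /=.
case: (ltngtP r.+1 T) rT => // rT _.
- by case: (hear3 (transmits D st i1)) => ->.
- by case: (hear3 (transmits D st i1)) => ->.
Qed.

Lemma prefix_tag n (adj : rel 'I_n) tag1 tag2 D v :
  (forall w, w != v -> tag1 w = tag2 w) ->
  forall r, r < tag1 v -> r < tag2 v -> forall w, state adj tag1 D r w = state adj tag2 D r w.
Proof.
move=> Et; elim=> [|r IH] l1 l2 w.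
  rewrite /= /step.
  case: (eqVneq w v) => [->|nv]; last by rewrite Et.
  by rewrite eq_sym (gtn_eqF l1) eq_sym (gtn_eqF l2); case: (reception _ _ _ _).
have IH' := IH (ltnW l1) (ltnW l2).
have Er : reception adj D (state adj tag1 D r) w = reception adj D (state adj tag2 D r) w
  by apply: reception_ext.
rewrite !stateS /step (IH' w) Er.
case: (eqVneq w v) => [->|nv]; last by rewrite Et.
by rewrite (ltnW l1) (ltnW l2) (ltn_eqF l1) (ltn_eqF l2).
Qed.

Lemma K_d_after D T2 r0 : r0 < T2 -> state adjK (tagK T2) D r0 i3 = None ->
  (forall r, r0 <= r -> transmits D (state adjK (tagK T2) D r) i1 = None /\
                       transmits D (state adjK (tagK T2) D r) i2 = None) ->
  forall k, state adjK (tagK T2) D (r0 + k) i3 =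
     if r0 + k < T2 then None else Some (nseq (r0 + k - T2).+1 HNone).
Proof.
move=> le H0 TA; elim=> [|k IH].
  by rewrite addn0 H0 le.
rewrite addnS stateS /step IH recK3.
have [-> ->] := TA (r0 + k) (leq_addr _ _).
rewrite /= /tagK /=.
case: (ltngtP (r0 + k).+1 T2) => lt.
- by [].
- rewrite subSn; last by rewrite -ltnS.
  by case: (eff_action _ _); rewrite -[HNone :: _]/(nseq _.+1 _) rcons_nseq.
- by rewrite lt subnn.
Qed.


Definition isColl (e : hentry) := if e is HColl then true else false.
Definition isMsg (e : hentry) := if e is HMsg _ then true else false.
Definition D2 (B : nat) : drip := fun h =>
  if has isColl h then Terminate
  else if has isMsg h then (if isMsg (last HNone h) then Transmit 0 else Terminate)
  else if size h == 1 then Transmit 0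
  else if B < size h then Terminate else Listen.
Definition f2 : decision := fun h => has isColl h.

Lemma D2_nseq B k : D2 B (nseq k HNone) =
  if k == 1 then Transmit 0 else if B < k then Terminate else Listen.
Proof. by rewrite /D2 !has_nseq /= !andbF size_nseq. Qed.

Lemma D2_nseq_nt B k : k <= B -> D2 B (nseq k HNone) <> Terminate.
Proof. by rewrite D2_nseq => kB; rewrite ltnNge kB; case: (k == 1). Qed.

Lemma take_nseq_cat (a k : nat) s : take k (nseq a HNone ++ s) =
  if k < a then nseq k HNone else nseq a HNone ++ take (k - a) s.
Proof. by rewrite take_cat size_nseq; case: ltnP => // ka; rewrite take_nseq // ltnW. Qed.

Lemma D2_cat B a s : D2 B (nseq a HNone ++ s) =
  if has isColl s then Terminate
  else if has isMsg s then (if isMsg (last HNone s) then Transmit 0 else Terminate)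
  else if a + size s == 1 then Transmit 0
  else if B < a + size s then Terminate else Listen.
Proof.
rewrite /D2 !has_cat !has_nseq /= !andbF /= size_cat size_nseq last_cat.
case: (has isColl s) => //; case E: (has isMsg s) => //.
by case: s E => //= x s _; rewrite (last_nth HNone) /= -(last_nth HNone).
Qed.

Lemma leader_of n (adj : rel 'I_n) tag D f (v : 'I_n) :
  (forall u, exists b, outputs adj tag D f u b) ->
  outputs adj tag D f v true ->
  (forall u, u != v -> outputs adj tag D f u false) ->
  dedicated_LE adj tag D f.
Proof.
move=> All Ov Oo; split=> //; exists v; split=> // u Ou.
case: (eqVneq u v) => // nu.
by have := outputs_fun Ou (Oo u nu).
Qed.

Local Notation DS T := (D2 T.+1).
Local Notation stS T := (state adjS (tagS T) (D2 T.+1)).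
Local Notation LL T := (nseq T.+1 HNone).

Lemma feasS T : 0 < T -> feasible adjS (tagS T).
Proof.
move=> T0; exists (D2 T.+1), f2.
have [H1 H2 H3 H0] := star_quiet (DS T) T0 (leqnn T).
rewrite [T < T]ltnn in H0.
have nT : (T.+1 == 1) = false by rewrite eqSS; case: eqP T0 => // ->.
have eL : eff_action (DS T) (LL T) = Listen.
  rewrite eff_notterm.
    by rewrite D2_nseq [T.+1 < T.+1]ltnn nT.
  move=> k /andP[k0]; rewrite size_nseq => kT.
  rewrite take_nseq; last exact: ltnW.
  by apply: D2_nseq_nt; apply: ltnW.
have e1 : eff_action (DS T) [:: HNone] = Transmit 0 by reflexivity.
have R1 : forall v, stS T T v = Some (LL T) ->
   reception adjS (DS T) (stS T T) v = hear [:: transmits (DS T) (stS T T) i0] ->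
   stS T T.+1 v = Some (LL T ++ [:: HMsg 0]).
  move=> v Hv Rv; rewrite stateS /step Hv eL Rv /transmits H0 e1.
  by rewrite cats1.
have G1 := R1 i1 H1 (recS1 _ _).
have G2 := R1 i2 H2 (recS2 _ _).
have G3 := R1 i3 H3 (recS3 _ _).
have G0 : stS T T.+1 i0 = Some [:: HNone; HNone].
  by rewrite stateS /step H0 e1.
have eM : eff_action (DS T) (LL T ++ [:: HMsg 0]) = Transmit 0.
  rewrite eff_notterm; first by rewrite D2_cat.
  move=> k /andP[k0]; rewrite size_cat size_nseq addn1 => kT.
  rewrite take_nseq_cat; case: ifP => kT'.
    by apply: D2_nseq_nt; apply: ltnW.
  have -> : k - T.+1 = 0 by lia.
  by rewrite D2_cat /= addn0 nT [T.+1 < T.+1]ltnn.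
have e2 : eff_action (DS T) [:: HNone; HNone] = Listen.
  rewrite eff_notterm.
    have F : (T.+1 < 2) = false by lia.
    by rewrite /D2 /= F.
  by case=> [|[|k]].
have tM : forall v, stS T T.+1 v = Some (LL T ++ [:: HMsg 0]) ->
   transmits (DS T) (stS T T.+1) v = Some 0.
  by move=> v Hv; rewrite /transmits Hv eM.
have R2 : forall v, stS T T.+1 v = Some (LL T ++ [:: HMsg 0]) ->
   stS T T.+2 v = Some (LL T ++ [:: HMsg 0; HNone]).
  by move=> v Hv; rewrite stateS /step Hv eM -cats1 -catA.
have K1 := R2 i1 G1.
have K2 := R2 i2 G2.
have K3 := R2 i3 G3.
have K0 : stS T T.+2 i0 = Some [:: HNone; HNone; HColl].
  by rewrite stateS /step G0 e2 recS0 (tM _ G1) (tM _ G2) (tM _ G3).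
have eT : eff_action (DS T) (LL T ++ [:: HMsg 0; HNone]) = Terminate.
  by rewrite /eff_action; case: has => //; rewrite D2_cat.
have eC : eff_action (DS T) [:: HNone; HNone; HColl] = Terminate.
  by rewrite /eff_action; case: has.
have J : forall v, stS T T.+2 v = Some (LL T ++ [:: HMsg 0; HNone]) ->
   stS T T.+3 v = Some (LL T ++ [:: HMsg 0; HNone; HNone]).
  by move=> v Hv; rewrite stateS /step Hv eT -cats1 -catA.
have J0 : stS T T.+3 i0 = Some [:: HNone; HNone; HColl; HNone].
  by rewrite stateS /step K0 eC.
have F : (T.+1 < 2) = false by lia.
have OL : forall v, stS T T.+3 v = Some (LL T ++ [:: HMsg 0; HNone; HNone]) ->
    outputs adjS (tagS T) (DS T) f2 v false.
  move=> v Hv; exists T.+3, (LL T ++ [:: HMsg 0; HNone; HNone]), T.+3.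
  split; first exact: Hv.
  split; first by [].
  split; first by rewrite size_cat size_nseq /=; lia.
  split.
    rewrite take_nseq_cat.
    have -> : (T.+3 < T.+1) = false by lia.
    have -> : T.+3 - T.+1 = 2 by lia.
    by rewrite D2_cat.
  split.
    move=> k /andP[k0 kT]; rewrite take_nseq_cat; case: ifP => kT'.
      by apply: D2_nseq_nt; apply: ltnW.
    have : (k - T.+1 = 0) \/ (k - T.+1 = 1) by lia.
    case=> ->; rewrite D2_cat //=.
    by rewrite addn0 nT [T.+1 < T.+1]ltnn.
  rewrite take_oversize; last by rewrite size_cat size_nseq /=; lia.
  by rewrite /f2 has_cat has_nseq andbF.
have O0 : outputs adjS (tagS T) (DS T) f2 i0 true.
  exists T.+3, [:: HNone; HNone; HColl; HNone], 3.
  split; first exact: J0.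
  split; first by [].
  split; first by [].
  split; first by reflexivity.
  split; last by reflexivity.
  case=> [|[|[|k]]] //= _.
  by rewrite /D2 /= F.
apply: (leader_of (v := i0)) => //.
  move=> u; case: (I4_cases u) => ->; [exists true | exists false; apply: OL..] => //.
  - exact: J K1.
  - exact: J K2.
  - exact: J K3.
move=> u; case: (I4_cases u) => -> // _; apply: OL.
- exact: J K1.
- exact: J K2.
- exact: J K3.
Qed.


Section S4.
Variables (adj : rel 'I_4) (tag : 'I_4 -> nat) (D : drip).
Definition reception4 (st : state_t 4) v :=
  hear [seq transmits D st u | u <- [:: i0; i1; i2; i3] & adj v u].
Definition step4 (st : state_t 4) (r : nat) : state_t 4 := fun v =>
  match st v with
  | Some h =>
      Some (rcons h (if eff_action D h is Listen then reception4 st v else HNone))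
  | None =>
      match reception4 st v with
      | HMsg m => if r <= tag v then Some [:: HMsg m] else None
      | _ => if r == tag v then Some [:: HNone] else None
      end
  end.
Fixpoint state4 (r : nat) : state_t 4 :=
  match r with
  | 0 => step4 (fun _ => None) 0
  | r'.+1 => step4 (state4 r') r
  end.
Lemma state4E r v : state adj tag D r v = state4 r v.
Proof.
elim: r v => [|r IH] v.
  by rewrite /= /step /step4 /reception /reception4 enum4.
have E : reception adj D (state adj tag D r) v = reception4 (state4 r) v.
  rewrite (reception_ext _ _ (st2 := state4 r)) //.
  by rewrite /reception /reception4 enum4.
by rewrite stateS /step /= /step4 -E IH.
Qed.
End S4.

Lemma feasK T2 : 5 <= T2 -> feasible adjK (tagK T2).
Proof.
move=> T5; exists (D2 2), f2.
have P : forall w, state adjK (tagK T2) (D2 2) 4 w = state4 adjK (tagK 5) (D2 2) 4 w.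
  move=> w; rewrite -state4E; apply: (@prefix_tag _ adjK _ _ (D2 2) i3).
  - by move=> u; case: (I4_cases u) => ->.
  - by rewrite /tagK /=; lia.
  - by [].
have S0 : state adjK (tagK T2) (D2 2) 4 i0 = Some [:: HNone; HNone; HColl; HNone].
  by rewrite P; vm_compute.
have S1 : state adjK (tagK T2) (D2 2) 4 i1 = Some [:: HNone; HNone; HMsg 0; HNone; HNone].
  by rewrite P; vm_compute.
have S2 : state adjK (tagK T2) (D2 2) 4 i2 = Some [:: HNone; HNone; HMsg 0; HNone; HNone].
  by rewrite P; vm_compute.
have S3 : state adjK (tagK T2) (D2 2) 4 i3 = None.
  by rewrite P; vm_compute.
have Oab : forall v, state adjK (tagK T2) (D2 2) 4 v = Some [:: HNone; HNone; HMsg 0; HNone; HNone] ->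
    outputs adjK (tagK T2) (D2 2) f2 v false.
  move=> v Hv; exists 4, [:: HNone; HNone; HMsg 0; HNone; HNone], 4.
  split; first exact: Hv.
  do 3 (split; first by []).
  split; last by [].
  by case=> [|[|[|[|k]]]].
have O0 : outputs adjK (tagK T2) (D2 2) f2 i0 true.
  exists 4, [:: HNone; HNone; HColl; HNone], 3.
  split; first exact: S0.
  do 3 (split; first by []).
  split; last by [].
  by case=> [|[|[|k]]].
have TA : forall r, 4 <= r -> transmits (D2 2) (state adjK (tagK T2) (D2 2) r) i1 = None /\ transmits (D2 2) (state adjK (tagK T2) (D2 2) r) i2 = None.
  move=> r le.
  have [h1 [E1 T1]] := terminated_after S1 (isT : 0 < 4 < 5) (erefl Terminate) le.
  have [h2 [E2 T2']] := terminated_after S2 (isT : 0 < 4 < 5) (erefl Terminate) le.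
  by split; [exact: transmits_term E1 T1 | exact: transmits_term E2 T2'].
have Dk := K_d_after (_ : 4 < T2) S3 TA (T2 - 1).
have E : 4 + (T2 - 1) = T2.+3 by lia.
have E' : T2.+3 - T2 = 3 by lia.
have L3 : (T2.+3 < T2) = false by lia.
rewrite E L3 E' in Dk.
have O3 : outputs adjK (tagK T2) (D2 2) f2 i3 false.
  exists T2.+3, (nseq 4 HNone), 3.
  split; first exact: Dk.
  do 3 (split; first by []).
  split; last by [].
  by case=> [|[|[|k]]].
apply: (leader_of (v := i0)) => //.
  move=> u; case: (I4_cases u) => ->; [exists true | exists false; apply: Oab.. | exists false] => //.
move=> u; case: (I4_cases u) => -> // _; by [apply: Oab | ].
Qed.


Theorem proposition4 :
  ~ exists (D : drip) (f : decision),
      forall (adj : rel 'I_4) (tag : 'I_4 -> nat),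
        simple_connected_graph adj -> feasible adj tag ->
        dedicated_LE adj tag D f.
Proof.
move=> [D [f H]].
case: (classic (exists s, 0 < s /\ D (nseq s HNone) = Terminate)) => [[s [s0 Hs]] | NS].
  apply: (case1 s0 Hs); apply: H; first exact: scgS.
  exact: feasS.
have NT : forall k, 0 < k -> D (nseq k HNone) <> Terminate.
  by move=> k k0 E; apply: NS; exists k.
have [T2 [T5 NK]] := case2 NT (H _ _ scgS (feasS (isT : 0 < 1))).
apply: NK; apply: H; first exact: scgK.
exact: feasK.
Qed.
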